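(* Let $P=\langle \mathit{Init}(X),\mathit{Tr}(X,X'),\mathit{Bad}(X)\rangle$ be a safety problem over $\mathcal{T}$, and suppose the Quic3 rules are applied to $P$ in any order starting from the initial state. If Quic3 returns Cex, then $P$ is not safe (there exists a counterexample). If Quic3 returns Safe, then $P$ is safe.
   Context: $\mathcal{T}$ is the combined first-order theory of linear integer arithmetic and arrays, with sorts $\mathsf{int}$ and $\mathsf{array}$ (array indices and values have sort $\mathsf{int}$; $\mathsf{sel}$, $\mathit{store}$ are array read/write). Formulas may contain uninterpreted constants; among them are Skolem constants $\mathit{SK}=\{sk_i: i\in\mathbb{N}\}$ of sort $\mathsf{int}$. Variables of sort $\mathsf{int}$ are named $v_i$. A substitution is a partial sort-respecting map from variables to terms; $\varphi\sigma$ is its application; $\emptyset$ is the empty substitution. The Skolem substitution $\mathit{sk}$ maps $v_i\mapsto sk_i$; $L_{\mathit{sk}}$ denotes $L\,\mathit{sk}$. $\mathit{Const}(\varphi)$, $\mathit{FVars}(\varphi)$ denote uninterpreted constants and free variables; $\forall\varphi$ / $\exists\varphi$ are universal / existential closures over all free variables; $\varphi\Rightarrow\psi$ means $\varphi\to\psi$ is valid in $\mathcal{T}$. For a set $U$ of constants and formula $\varphi$, $\mathit{abs}(U,\varphi)=(\psi,\sigma)$: $\psi$ is obtained from $\varphi$ by replacing each constant of $U$ by a variable not free in $\varphi$, each $sk_i\in U$ being replaced by $v_i$; $\mathit{dom}(\sigma)=\mathit{FVars}(\psi)\setminus\mathit{FVars}(\varphi)$, $\psi\sigma=\varphi$, and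 no constant of $U$ occurs in $\psi$. For ground $\varphi$, $\exists U\cdot\varphi$ denotes $\exists\psi$ with $(\psi,\_)=\mathit{abs}(U,\varphi)$. A partial model-based projection $\textsc{pMbp}(U,\varphi,M)=(\psi,W)$ (for ground $\varphi$, $M\models\varphi$, $U\subseteq\mathit{Const}(\varphi)$) satisfies: $\psi$ is a conjunction of ground literals; $W\subseteq U$, $\mathit{Const}(\psi)\subseteq\mathit{Const}(\varphi)\setminus(U\setminus W)$; $\psi\Rightarrow\exists(U\setminus W)\cdot\varphi$; $M\models\psi$; for fixed $U,\varphi$ only finitely many values arise over all models $M$; $W$ contains no array constant. For ground $A,B$ with $A\wedge B$ unsatisfiable, $\textsc{Itp}(A,B)$ is an interpolant: a ground formula $I$ with $\mathit{Const}(I)\subseteq\mathit{Const}(A)\cap\mathit{Const}(B)$, $A\Rightarrow I$ and $I\Rightarrow\neg B$. A safety problem $\langle \mathit{Init}(X),\mathit{Tr}(X,X'),\mathit{Bad}(X)\rangle$ has a finite set $X$ of constants disjoint from $\mathit{SK}$, primed copy $X'=\{a'\mid a\in X\}$, and quantifier-free ground $\mathit{Init},\mathit{Bad}$ over $X$ and $\mathit{Tr}$ over $X\cup X'$. $\varphi'$ replaces each $a\in X$ by $a'$ in $\varphi$, and for $L'$ a formula over $X'\cup\mathit{SK}$, $L$ denotes its unprimed version. $\mathcal{F}(A)=(A(X)\wedge\mathit{Tr}(X,X'))\vee\mathit{Init}(X')$. $P$ has a counterexample of length $k$ if $\mathit{Init}(X_0)\wedge\bigwedge_{j=0}^{k-1}\mathit{Tr}(X_j,X_{j+1})\wedge\mathit{Bad}(X_k)$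 is satisfiable, where $X_j$ are disjoint copies of $X$; $P$ is safe if it has no counterexample of any length. A frame $Q$ is a finite set of pairs $(\ell,\sigma)$, $\ell$ quantifier-free over $X$ with free variables of sort $\mathsf{int}$, $\sigma$ a substitution with $\mathit{FVars}(\ell)\subseteq\mathit{dom}(\sigma)$ and range in $X'\cup\mathit{SK}$; $\forall Q$ is the set (read as conjunction) of $\forall\ell$ and $\mathit{qi}(Q)$ the conjunction of $\ell\sigma$ over $(\ell,\sigma)\in Q$. A proof obligation (POB) is $\langle m,\sigma,i\rangle$ with $m$ a conjunction of literals over $X$ with free $\mathsf{int}$ variables, $m\sigma$ ground, $i\in\mathbb N$. Quic3 maintains a POB queue $\mathcal Q$, a level $N$ and frames $Q_0,Q_1,\dots$; initially $\mathcal Q=\emptyset$, $N=0$, $Q_0=\{(\mathit{Init},\emptyset)\}$, $Q_i=\emptyset$ for $i>0$. It applies, in any order, the rules: (Safe) if some $i<N$ has $\forall Q_i\subseteq\forall Q_{i+1}$, return Safe; (Cex) if some $\langle m,\sigma,0\rangle\in\mathcal Q$, return Cex; (Unfold) if $\mathit{qi}(Q_N)\Rightarrow\neg\mathit{Bad}$, set $N\gets N+1$; (Candidate) if $m$ is a monomial with $m\Rightarrow\mathit{qi}(Q_N)\wedge\mathit{Bad}$, add $\langle m,\emptyset,N\rangle$ to $\mathcal Q$; (Predecessor) if $\langle m,\xi,i+1\rangle\in\mathcal Q$ and $M\models\mathit{qi}(Q_i)\wedge\mathit{Tr}\wedge m'_{\mathit{sk}}$, add $\langle\psi,\sigma,i\rangle$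 where $(\psi,\sigma)=\mathit{abs}(U,\varphi)$ and $(\varphi,U)=\textsc{pMbp}(X'\cup\mathit{SK},\mathit{Tr}\wedge m'_{\mathit{sk}},M)$; (NewLemma) for $0\le i<N$ and $\langle m,\sigma,i+1\rangle\in\mathcal Q$ with $\mathcal F(\mathit{qi}(Q_i))\wedge m'_{\mathit{sk}}$ unsatisfiable, let $L'=\textsc{Itp}(\mathcal F(\mathit{qi}(Q_i)),m'_{\mathit{sk}})$ and $(\ell,\_)=\mathit{abs}(\mathit{SK},L)$, and add $(\ell,\sigma)$ to $Q_j$ for all $j\le i+1$; (Push) for $0\le i<N$ and $((\varphi\vee\psi),\sigma)\in Q_i$, if $(\varphi,\sigma)\notin Q_{i+1}$, $\mathit{Init}\Rightarrow\forall\varphi$ and $(\forall\varphi)\wedge\forall Q_i\wedge\mathit{qi}(Q_i)\wedge\mathit{Tr}\Rightarrow\forall\varphi'$, add $(\varphi,\sigma)$ to $Q_j$ for all $j\le i+1$. *)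

(* Defs.v *)
From Stdlib Require Import ZArith List Permutation.
Import ListNotations.

Inductive sort := SInt | SArr.

Definition sort_eq_dec (a b : sort) : {a = b} + {a <> b}.
Proof. decide equality. Defined.

(* Uninterpreted constants.  [Sk i] is the Skolem constant sk_i (sort int).
   [Uc s n p] is an uninterpreted constant of sort s; the flag p = true marks
   the primed copy a' of the constant a = Uc s n false. *)
Inductive const :=
| Sk (i : nat)
| Uc (s : sort) (n : nat) (p : bool).

Definition const_eq_dec (a b : const) : {a = b} + {a <> b}.
Proof. decide equality; first [apply Nat.eq_dec | apply Bool.bool_dec | apply sort_eq_dec]. Defined.

Definition csort (c : const) : sort :=
  match c with Sk _ => SInt | Uc s _ _ => s end.

Definition is_sk (c : const) : Prop := match c with Sk _ => True | _ => False end.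

Inductive term : sort -> Type :=
| Var : forall s, nat -> term s
| Cst : forall c : const, term (csort c)
| Num : Z -> term SInt
| Add : term SInt -> term SInt -> term SInt
| Sub : term SInt -> term SInt -> term SInt
| MulC : Z -> term SInt -> term SInt
| Sel : term SArr -> term SInt -> term SInt
| Store : term SArr -> term SInt -> term SInt -> term SArr.

(* Quantifier-free formulas (all formulas manipulated by Quic3 are
   quantifier-free; closures are given semantically below). *)
Inductive form :=
| FTrue | FFalse
| FLe : term SInt -> term SInt -> form
| FEq : forall s, term s -> term s -> form
| FDvd : Z -> term SInt -> form
| FNot : form -> form
| FAnd : form -> form -> form
| FOr : form -> form -> form
| FImp : form -> form -> form.

Definition sval (s : sort) : Type := match s with SInt => Z | SArr => (Z -> Z) end.

Definition interp := forall c : const, sval (csort c).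
Definition env := forall s : sort, nat -> sval s.

Fixpoint eval (M : interp) (e : env) {s : sort} (t : term s) : sval s :=
  match t in term s0 return sval s0 with
  | Var s0 i => e s0 i
  | Cst c => M c
  | Num z => z
  | Add a b => (eval M e a + eval M e b)%Z
  | Sub a b => (eval M e a - eval M e b)%Z
  | MulC k a => (k * eval M e a)%Z
  | Sel a i => (eval M e a) (eval M e i)
  | Store a i v => fun j => if Z.eqb j (eval M e i) then eval M e v else eval M e a j
  end.

Fixpoint sat (M : interp) (e : env) (f : form) : Prop :=
  match f with
  | FTrue => True
  | FFalse => False
  | FLe a b => (eval M e a <= eval M e b)%Z
  | FEq _ a b => eval M e a = eval M e b
  | FDvd k a => Z.divide k (eval M e a)
  | FNot g => ~ sat M e g
  | FAnd g h => sat M e g /\ sat M e h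
  | FOr g h => sat M e g \/ sat M e h
  | FImp g h => sat M e g -> sat M e h
  end.

(* M |= f  (for ground f the environment is irrelevant); also the truth in M
   of the universal closure  \forall f. *)
Definition Msat (M : interp) (f : form) : Prop := forall e : env, sat M e f.

Definition valid (f : form) : Prop := forall (M : interp) (e : env), sat M e f.
Definition implies (f g : form) : Prop := valid (FImp f g).
Definition satisfiable (f : form) : Prop := exists (M : interp) (e : env), sat M e f.

Fixpoint free_t (s0 : sort) (n : nat) {s : sort} (t : term s) : Prop :=
  match t with
  | Var s1 i => s1 = s0 /\ i = n
  | Cst _ | Num _ => False
  | Add a b | Sub a b => free_t s0 n a \/ free_t s0 n b
  | MulC _ a => free_t s0 n a
  | Sel a i => free_t s0 n a \/ free_t s0 n i
  | Store a i v => free_t s0 n a \/ free_t s0 n i \/ free_t s0 n v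
  end.

Fixpoint free (s0 : sort) (n : nat) (f : form) : Prop :=
  match f with
  | FTrue | FFalse => False
  | FLe a b => free_t s0 n a \/ free_t s0 n b
  | FEq _ a b => free_t s0 n a \/ free_t s0 n b
  | FDvd _ a => free_t s0 n a
  | FNot g => free s0 n g
  | FAnd g h | FOr g h | FImp g h => free s0 n g \/ free s0 n h
  end.

Definition ground (f : form) : Prop := forall s n, ~ free s n f.

Fixpoint occurs_t (c : const) {s : sort} (t : term s) : Prop :=
  match t with
  | Var _ _ | Num _ => False
  | Cst d => d = c
  | Add a b | Sub a b => occurs_t c a \/ occurs_t c b
  | MulC _ a => occurs_t c a
  | Sel a i => occurs_t c a \/ occurs_t c i
  | Store a i v => occurs_t c a \/ occurs_t c i \/ occurs_t c v
  end.

Fixpoint occurs (c : const) (f : form) : Prop :=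
  match f with
  | FTrue | FFalse => False
  | FLe a b => occurs_t c a \/ occurs_t c b
  | FEq _ a b => occurs_t c a \/ occurs_t c b
  | FDvd _ a => occurs_t c a
  | FNot g => occurs c g
  | FAnd g h | FOr g h | FImp g h => occurs c g \/ occurs c h
  end.

Fixpoint map_t (fv : forall s, nat -> term s) (fc : forall c, term (csort c))
  {s : sort} (t : term s) : term s :=
  match t in term s0 return term s0 with
  | Var s0 i => fv s0 i
  | Cst c => fc c
  | Num z => Num z
  | Add a b => Add (map_t fv fc a) (map_t fv fc b)
  | Sub a b => Sub (map_t fv fc a) (map_t fv fc b)
  | MulC k a => MulC k (map_t fv fc a)
  | Sel a i => Sel (map_t fv fc a) (map_t fv fc i)
  | Store a i v => Store (map_t fv fc a) (map_t fv fc i) (map_t fv fc v)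
  end.

Fixpoint map_f (fv : forall s, nat -> term s) (fc : forall c, term (csort c))
  (f : form) : form :=
  match f with
  | FTrue => FTrue
  | FFalse => FFalse
  | FLe a b => FLe (map_t fv fc a) (map_t fv fc b)
  | FEq s a b => FEq s (map_t fv fc a) (map_t fv fc b)
  | FDvd k a => FDvd k (map_t fv fc a)
  | FNot g => FNot (map_f fv fc g)
  | FAnd g h => FAnd (map_f fv fc g) (map_f fv fc h)
  | FOr g h => FOr (map_f fv fc g) (map_f fv fc h)
  | FImp g h => FImp (map_f fv fc g) (map_f fv fc h)
  end.

Definition subst := forall s : sort, nat -> option (term s).

Definition empty_subst : subst := fun _ _ => None.

Definition in_dom (sg : subst) (s : sort) (n : nat) : Prop := sg s n <> None.

Definition apply_subst (sg : subst) (f : form) : form :=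
  map_f (fun s i => match sg s i with Some u => u | None => Var s i end) Cst f.

Definition sk_subst : subst :=
  fun s n => match s as s0 return option (term s0) with
             | SInt => Some (Cst (Sk n))
             | SArr => None
             end.

Definition skolemize (f : form) : form := apply_subst sk_subst f.

Definition repl_consts (g : const -> option nat) (f : form) : form :=
  map_f Var (fun c => match g c with Some n => Var (csort c) n | None => Cst c end) f.

(* abs(U, phi) = (psi, sigma), as a relation (the choice of the fresh
   variables is left open). *)
Definition abs_rel (U : const -> Prop) (phi psi : form) (sg : subst) : Prop :=
  exists g : const -> option nat,
    (forall c, U c <-> g c <> None) /\
    (forall i, U (Sk i) -> g (Sk i) = Some i) /\
    (forall c n, g c = Some n -> ~ free (csort c) n phi) /\
    psi = repl_consts g phi /\
    (forall s n, in_dom sg s n <-> (free s n psi /\ ~ free s n phi)) /\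
    apply_subst sg psi = phi /\
    (forall c, U c -> ~ occurs c psi).

Section Priming.
Variable X : list const.

Definition prime_cst (c : const) : term (csort c) :=
  match c as c0 return term (csort c0) with
  | Uc s n false =>
      if in_dec const_eq_dec (Uc s n false) X then Cst (Uc s n true)
      else Cst (Uc s n false)
  | c0 => Cst c0
  end.

Definition unprime_cst (c : const) : term (csort c) :=
  match c as c0 return term (csort c0) with
  | Uc s n true =>
      if in_dec const_eq_dec (Uc s n false) X then Cst (Uc s n false)
      else Cst (Uc s n true)
  | c0 => Cst c0
  end.

Definition primef (f : form) : form := map_f Var prime_cst f.
Definition unprimef (f : form) : form := map_f Var unprime_cst f.

Definition in_Xp (c : const) : Prop :=
  match c with Uc s n true => In (Uc s n false) X | _ => False end.
End Priming.

Definition is_atom (f : form) : Prop :=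
  match f with FLe _ _ | FEq _ _ _ | FDvd _ _ => True | _ => False end.

Definition is_lit (f : form) : Prop :=
  is_atom f \/ (exists a, f = FNot a /\ is_atom a).

Fixpoint is_conj (f : form) : Prop :=
  match f with
  | FTrue => True
  | FAnd g h => is_conj g /\ is_conj h
  | _ => is_lit f
  end.

Fixpoint disjuncts (f : form) : list form :=
  match f with
  | FOr g h => disjuncts g ++ disjuncts h
  | FFalse => []
  | _ => [f]
  end.

Definition agree_outside (V : const -> Prop) (M M' : interp) : Prop :=
  forall c, ~ V c -> M' c = M c.

Definition pmbp_ok (U : const -> Prop) (phi : form) (M : interp)
  (psi : form) (W : const -> Prop) : Prop :=
  is_conj psi /\ ground psi /\
  (forall c, W c -> U c) /\
  (forall c, occurs c psi -> occurs c phi /\ ~ (U c /\ ~ W c)) /\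
  (* psi => exists (U \ W) . phi *)
  (forall M', Msat M' psi ->
     exists M'', agree_outside (fun c => U c /\ ~ W c) M' M'' /\ Msat M'' phi) /\
  Msat M psi /\
  (forall c, W c -> csort c = SInt).

Definition itp_ok (A B I : form) : Prop :=
  ground I /\
  (forall c, occurs c I -> occurs c A /\ occurs c B) /\
  implies A I /\ implies I (FNot B).

(* the interpretation of X u X' given the two states M (for X) and M2 (for X') *)
Definition join (M M2 : interp) : interp :=
  fun c => match c as c0 return sval (csort c0) with
           | Uc s n true => M2 (Uc s n false)
           | c0 => M c0
           end.

Definition has_cex (Init Tr Bad : form) (k : nat) : Prop :=
  exists Ms : nat -> interp,
    Msat (Ms 0) Init /\
    (forall j, j < k -> Msat (join (Ms j) (Ms (S j))) Tr) /\
    Msat (Ms k) Bad.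

Definition is_safe (Init Tr Bad : form) : Prop :=
  ~ exists k, has_cex Init Tr Bad k.

Definition safety_problem (X : list const) (Init Tr Bad : form) : Prop :=
  (forall c, In c X -> exists s n, c = Uc s n false) /\
  ground Init /\ ground Tr /\ ground Bad /\
  (forall c, occurs c Init -> In c X) /\
  (forall c, occurs c Bad -> In c X) /\
  (forall c, occurs c Tr -> In c X \/ in_Xp X c).

Definition frame := list (form * subst).
Definition pob := (form * subst * nat)%type.

Record state := mkState {
  queue : list pob;
  level : nat;
  frames : nat -> frame
}.

Definition qi (Q : frame) : form :=
  fold_right (fun p acc => FAnd (apply_subst (snd p) (fst p)) acc) FTrue Q.

Definition all_Q (M : interp) (Q : frame) : Prop :=
  forall p, In p Q -> Msat M (fst p).

Definition forall_incl (Q1 Q2 : frame) : Prop :=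
  forall p, In p Q1 -> exists p', In p' Q2 /\ fst p' = fst p.

Definition add_upto (F : nat -> frame) (k : nat) (p : form * subst) : nat -> frame :=
  fun j => if Nat.leb j k then p :: F j else F j.

Section Quic3.
Variables (X : list const) (Init Tr Bad : form).

Definition init_state : state :=
  mkState [] 0 (fun i => match i with 0 => [(Init, empty_subst)] | _ => [] end).

Definition is_pob (m : form) (sg : subst) : Prop :=
  is_conj m /\ (forall c, occurs c m -> In c X) /\
  (forall s n, free s n m -> s = SInt) /\ ground (apply_subst sg m).

Definition Fop (A : form) : form := FOr (FAnd A Tr) (primef X Init).

Definition mpsk (m : form) : form := skolemize (primef X m).

Inductive step : state -> state -> Prop :=
| RUnfold : forall Qs N F,
    implies (qi (F N)) (FNot Bad) ->
    step (mkState Qs N F) (mkState Qs (S N) F)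
| RCandidate : forall Qs N F m,
    is_pob m empty_subst -> satisfiable m ->
    implies m (FAnd (qi (F N)) Bad) ->
    step (mkState Qs N F) (mkState ((m, empty_subst, N) :: Qs) N F)
| RPredecessor : forall Qs N F m xi i M phi W psi sg,
    In (m, xi, S i) Qs ->
    Msat M (FAnd (qi (F i)) (FAnd Tr (mpsk m))) ->
    pmbp_ok (fun c => (in_Xp X c \/ is_sk c) /\ occurs c (FAnd Tr (mpsk m)))
            (FAnd Tr (mpsk m)) M phi W ->
    abs_rel W phi psi sg ->
    step (mkState Qs N F) (mkState ((psi, sg, i) :: Qs) N F)
| RNewLemma : forall Qs N F m sg i Lp l sg',
    i < N ->
    In (m, sg, S i) Qs ->
    ~ satisfiable (FAnd (Fop (qi (F i))) (mpsk m)) ->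
    itp_ok (Fop (qi (F i))) (mpsk m) Lp ->
    abs_rel is_sk (unprimef X Lp) l sg' ->
    step (mkState Qs N F) (mkState Qs N (add_upto F (S i) (l, sg)))
| RPush : forall Qs N F i l phi psi sg,
    i < N ->
    In (l, sg) (F i) ->
    Permutation (disjuncts l) (disjuncts phi ++ disjuncts psi) ->
    ~ In (phi, sg) (F (S i)) ->
    (forall M, Msat M Init -> Msat M phi) ->
    (forall M, Msat M phi -> all_Q M (F i) -> Msat M (qi (F i)) -> Msat M Tr ->
               Msat M (primef X phi)) ->
    step (mkState Qs N F) (mkState Qs N (add_upto F (S i) (phi, sg))).

Inductive reachable : state -> Prop :=
| reach_init : reachable init_state
| reach_step : forall s t, reachable s -> step s t -> reachable t.

(* (Cex) is applicable: Quic3 returns Cex *)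
Definition returns_cex (s : state) : Prop :=
  exists m sg, In (m, sg, 0) (queue s).

(* (Safe) is applicable: Quic3 returns Safe *)
Definition returns_safe (s : state) : Prop :=
  exists i, i < level s /\ forall_incl (frames s i) (frames s (S i)).

End Quic3.

(* Main.v *)
Require Import Defs.
From Stdlib Require Import ZArith List Permutation Lia.
Import ListNotations.

Lemma eval_map M e fv fc s (t : term s) :
  eval M e (map_t fv fc t) =
  eval (fun c => eval M e (fc c)) (fun s n => eval M e (fv s n)) t.
Proof.
  induction t; simpl; try rewrite IHt; try rewrite IHt1; try rewrite IHt2;
  try rewrite IHt3; reflexivity.
Qed.

Lemma sat_map M e fv fc f :
  sat M e (map_f fv fc f) <->
  sat (fun c => eval M e (fc c)) (fun s n => eval M e (fv s n)) f.
Proof.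
  induction f; simpl; rewrite ?eval_map; tauto.
Qed.

Lemma eval_ext M1 M2 e1 e2 s (t : term s) :
  (forall c, occurs_t c t -> M1 c = M2 c) ->
  (forall s n, free_t s n t -> e1 s n = e2 s n) ->
  eval M1 e1 t = eval M2 e2 t.
Proof.
  induction t; simpl; intros HM He.
  all: try (apply He; simpl; auto; fail); try (apply HM; reflexivity; fail).
  all: try rewrite IHt by (intros; first [apply HM | apply He]; tauto);
       try rewrite IHt1 by (intros; first [apply HM | apply He]; tauto);
       try rewrite IHt2 by (intros; first [apply HM | apply He]; tauto);
       try rewrite IHt3 by (intros; first [apply HM | apply He]; tauto);
       reflexivity.
Qed.

Lemma sat_ext M1 M2 e1 e2 f :
  (forall c, occurs c f -> M1 c = M2 c) ->
  (forall s n, free s n f -> e1 s n = e2 s n) ->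
  (sat M1 e1 f <-> sat M2 e2 f).
Proof.
  induction f; simpl; intros HM He; try tauto.
  all: try (rewrite (eval_ext M1 M2 e1 e2 _ t) by (intros; first [apply HM | apply He]; tauto));
       try (rewrite (eval_ext M1 M2 e1 e2 _ t0) by (intros; first [apply HM | apply He]; tauto));
       try tauto.
  all: try rewrite IHf by (intros; first [apply HM | apply He]; tauto);
       try rewrite IHf1 by (intros; first [apply HM | apply He]; tauto);
       try rewrite IHf2 by (intros; first [apply HM | apply He]; tauto);
       tauto.
Qed.

Lemma ground_sat M e e' f : ground f -> sat M e f -> sat M e' f.
Proof.
  intros G. apply sat_ext; auto. intros s n Hf. exfalso; exact (G s n Hf).
Qed.

Lemma occurs_t_map c fv fc s (t : term s) :
  occurs_t c (map_t fv fc t) ->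
  (exists s n, free_t s n t /\ occurs_t c (fv s n)) \/
  (exists d, occurs_t d t /\ occurs_t c (fc d)).
Proof.
  induction t; simpl; intros H.
  1: (left; exists s, n; simpl; auto).
  1: (right; exists c0; auto).
  all: firstorder.
Qed.

Lemma occurs_map c fv fc f :
  occurs c (map_f fv fc f) ->
  (exists s n, free s n f /\ occurs_t c (fv s n)) \/
  (exists d, occurs d f /\ occurs_t c (fc d)).
Proof.
  induction f; simpl; intros H; try contradiction;
  try destruct H as [H|H];
  repeat match goal with H : occurs_t _ (map_t _ _ _) |- _ => apply occurs_t_map in H end;
  firstorder.
Qed.

Lemma disj_occ c f : occurs c f -> exists d, In d (disjuncts f) /\ occurs c d.
Proof.
  induction f; simpl; intros H; try contradiction;
  try (eexists; split; [left; reflexivity | simpl; auto]; fail).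
  destruct H as [H|H]; [destruct (IHf1 H) as [d [? ?]] | destruct (IHf2 H) as [d [? ?]]];
  exists d; rewrite in_app_iff; auto.
Qed.

Lemma occ_disj c f d : In d (disjuncts f) -> occurs c d -> occurs c f.
Proof.
  induction f; simpl; intros H1 H2;
  try (destruct H1 as [<-|[]]; exact H2); try contradiction.
  rewrite in_app_iff in H1; destruct H1; auto.
Qed.

Lemma apply_subst_sat M e sg f :
  sat M e (apply_subst sg f) <->
  sat M (fun s n => eval M e (match sg s n with Some u => u | None => Var s n end)) f.
Proof. unfold apply_subst. apply sat_map. Qed.

Lemma all_Q_qi M Q : all_Q M Q -> Msat M (qi Q).
Proof.
  induction Q as [|p Q IH]; intros H e; simpl; auto.
  split.
  - apply apply_subst_sat. apply (H p); simpl; auto.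
  - apply IH; intros q Hq; apply H; simpl; auto.
Qed.

Lemma qi_in M e p Q : In p Q -> sat M e (qi Q) -> sat M e (apply_subst (snd p) (fst p)).
Proof.
  induction Q; simpl; intros H1 H2; [contradiction|].
  destruct H1 as [<-|H1]; [tauto|]. apply IHQ; tauto.
Qed.

Lemma mpsk_occ X m c :
  (forall d, occurs d m -> In d X) ->
  (forall d, In d X -> exists s n, d = Uc s n false) ->
  occurs c (mpsk X m) -> in_Xp X c \/ is_sk c.
Proof.
  intros Hm HX H. unfold mpsk, skolemize, apply_subst in H.
  apply occurs_map in H.
  destruct H as [[s [n [_ H]]]|[d [Hd H]]].
  - destruct s; simpl in H; [|contradiction]. subst c. right; exact I.
  - simpl in H. subst d. unfold primef in Hd. apply occurs_map in Hd.
    destruct Hd as [[s [n [_ H]]]|[d [Hd H]]]; [simpl in H; contradiction|].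
    destruct (HX d (Hm d Hd)) as [s [n ->]].
    simpl in H. destruct (in_dec const_eq_dec (Uc s n false) X) as [i|ni].
    + simpl in H. subst c. left. exact i.
    + exfalso. apply ni. apply Hm; auto.
Qed.

Definition env0 : env := fun s => match s as s0 return nat -> sval s0 with
  | SInt => fun _ => 0%Z | SArr => fun _ _ => 0%Z end.

Definition path_bad (Tr Bad : form) (M : interp) : Prop :=
  exists k (Ms : nat -> interp), Ms 0 = M /\
   (forall j, j < k -> Msat (join (Ms j) (Ms (S j))) Tr) /\ Msat (Ms k) Bad.

Definition Inv (X : list const) (Init Tr Bad : form) (st : state) : Prop :=
 (forall m sg i, In (m,sg,i) (queue st) -> forall c, occurs c m -> In c X) /\
 (forall m sg i, In (m,sg,i) (queue st) -> forall M e, sat M e m -> path_bad Tr Bad M) /\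
 (forall m sg, In (m,sg,0) (queue st) -> exists M e, sat M e m /\ Msat M Init) /\
 In (Init, empty_subst) (frames st 0) /\
 (forall i j p, j <= i -> In p (frames st i) -> In p (frames st j)) /\
 (forall i p c, In p (frames st i) -> occurs c (fst p) -> In c X) /\
 (forall i M, Msat M Init -> all_Q M (frames st i)) /\
 (forall i M M2, all_Q M (frames st i) -> Msat (join M M2) Tr -> all_Q M2 (frames st (S i))) /\
 (forall i, i < level st -> forall M e, all_Q M (frames st i) -> ~ sat M e Bad).

Lemma in_add_upto F k q j p :
  In p (add_upto F k q j) <-> (j <= k /\ p = q) \/ In p (F j).
Proof.
  unfold add_upto. destruct (Nat.leb j k) eqn:E.
  - apply Nat.leb_le in E. simpl. intuition.
  - apply Nat.leb_gt in E. intuition lia.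
Qed.

Lemma Inv_init X Init Tr Bad : safety_problem X Init Tr Bad ->
  Inv X Init Tr Bad (init_state Init).
Proof.
  intros (HX & GI & GT & GB & CI & CB & CT).
  unfold Inv, init_state; simpl.
  repeat split; intros; try contradiction; try lia.
  - left; reflexivity.
  - destruct i; [|contradiction]. assert (j = 0) by lia. subst; auto.
  - destruct i; [|contradiction]. destruct H as [<-|[]]. apply CI; auto.
  - intros p Hp. destruct i; [|contradiction]. destruct Hp as [<-|[]]. exact H.
  - intros p Hp; contradiction.
Qed.

Lemma pred_ok X Init Tr Bad Qs N F m xi i M phi W psi sg :
 safety_problem X Init Tr Bad ->
 Inv X Init Tr Bad (mkState Qs N F) -> In (m,xi,S i) Qs ->
 Msat M (FAnd (qi (F i)) (FAnd Tr (mpsk X m))) ->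
 pmbp_ok (fun c => (in_Xp X c \/ is_sk c) /\ occurs c (FAnd Tr (mpsk X m)))
            (FAnd Tr (mpsk X m)) M phi W ->
 abs_rel W phi psi sg ->
 Inv X Init Tr Bad (mkState ((psi,sg,i)::Qs) N F).
Proof.
  intros hP HI Hin HM Hp Ha.
  destruct hP as (HX & GI & GT & GB & CI & CB & CT).
  destruct HI as (Q1 & Q2 & Q3 & F1 & R).
  destruct Hp as (_ & Gphi & WU & Cphi & Ext & Mphi & Wsort).
  destruct Ha as (g & gW & gSk & gfree & psieq & dom & subeq & Wn).
  assert (Hm : forall c, occurs c m -> In c X) by (intros; eapply Q1; eauto).
  unfold Inv; simpl. split; [|split; [|split]]; try exact (conj F1 R).
  - intros m' sg' i' [H|H]; [|eapply Q1; eauto].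
    injection H as <- <- <-. intros c Hc. subst psi. unfold repl_consts in Hc.
    apply occurs_map in Hc.
    destruct Hc as [[s [n [_ H]]]|[d [Hd H]]]; [simpl in H; contradiction|].
    destruct (g d) eqn:Eg; simpl in H; [contradiction|]. subst d.
    destruct (Cphi c Hd) as [Hocc HnU].
    assert (nW : ~ W c) by (intro Wc; apply gW in Wc; contradiction).
    destruct Hocc as [Ht|Ht].
    + destruct (CT c Ht) as [Hx|Hx]; auto.
      exfalso; apply HnU; split; [split; [left; exact Hx| left; exact Ht]|exact nW].
    + exfalso. apply HnU. split; [split; [|right; exact Ht]|exact nW].
      eapply mpsk_occ; eauto.
  - intros m' sg' i' [H|H]; [|eapply Q2; eauto].
    injection H as <- <- <-. intros M0 e Hs.
    set (fcg := fun c => match g c with Some n => Var (csort c) n | None => Cst c end).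
    set (M' := fun c => eval M0 e (fcg c)).
    assert (HM'e : sat M' e phi).
    { subst psi. unfold repl_consts in Hs. apply sat_map in Hs. exact Hs. }
    assert (HM' : Msat M' phi) by (intro e'; eapply ground_sat; eauto).
    destruct (Ext M' HM') as [M'' [Hag HM'']].
    set (e1 := fun s n => eval M'' e (match sk_subst s n with Some u => u | None => Var s n end)).
    set (N1 := fun c => eval M'' e1 (prime_cst X c)).
    assert (HN1 : sat N1 e1 m).
    { destruct (HM'' e) as [_ H]. unfold mpsk, skolemize in H.
      apply apply_subst_sat in H. unfold primef in H. apply sat_map in H. exact H. }
    destruct (Q2 m xi (S i) Hin N1 e1 HN1) as [k [Ms [H0 [Htr Hbad]]]].
    exists (S k), (fun j => match j with 0 => M0 | S j' => Ms j' end).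
    split; [reflexivity|]. split; [|exact Hbad].
    intros j Hj. destruct j.
    + rewrite H0. intro e2.
      assert (Hc : forall c, occurs c Tr -> M'' c = join M0 N1 c).
      { intros c Hc. destruct (CT c Hc) as [Hx|Hx].
        - destruct (HX c Hx) as [s [n ->]].
          assert (nU : ~ ((in_Xp X (Uc s n false) \/ is_sk (Uc s n false)) /\
                     occurs (Uc s n false) (FAnd Tr (mpsk X m)))).
          { simpl. tauto. }
          rewrite Hag by tauto.
          assert (Eg : g (Uc s n false) = None).
          { destruct (g (Uc s n false)) eqn:E; auto. exfalso.
            assert (W (Uc s n false)) by (apply gW; congruence). apply nU; auto. }
          unfold M', fcg. rewrite Eg. reflexivity.
        - destruct c as [|s n [|]]; simpl in Hx; try contradiction.
          simpl. unfold N1. simpl. destruct (in_dec const_eq_dec (Uc s n false) X);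
          [reflexivity|contradiction]. }
      apply (proj1 (sat_ext M'' (join M0 N1) e2 e2 Tr Hc (fun _ _ _ => eq_refl))).
      apply HM''.
    + simpl. apply Htr. lia.
  - intros m' sg' [H|H]; [|eapply Q3; eauto].
    injection H as <- <- Hi. subst i.
    exists M, (fun s n => eval M env0 (match sg s n with Some u => u | None => Var s n end)).
    split.
    + apply apply_subst_sat. rewrite subeq. apply Mphi.
    + destruct (HM env0) as [Hq _]. apply (qi_in _ _ _ _ F1) in Hq.
      apply apply_subst_sat in Hq. intro e'. eapply ground_sat; eauto.
Qed.
Arguments add_upto : simpl never.

Lemma l_sem X Lp l g M e :
  l = repl_consts g (unprimef X Lp) ->
  (sat M e l <->
   sat (fun c => eval (fun d => eval M e
          (match g d with Some n => Var (csort d) n | None => Cst d end)) e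
          (unprime_cst X c)) e Lp).
Proof.
  intros ->. unfold repl_consts, unprimef. rewrite sat_map. rewrite sat_map. reflexivity.
Qed.

Lemma sat_ext_imp M1 M2 e1 e2 f :
  (forall c, occurs c f -> M1 c = M2 c) ->
  (forall s n, free s n f -> e1 s n = e2 s n) ->
  sat M1 e1 f -> sat M2 e2 f.
Proof. intros H1 H2. apply (proj1 (sat_ext M1 M2 e1 e2 f H1 H2)). Qed.

Lemma join_X (X : list const) M M2 c :
  (forall d, In d X -> exists s n, d = Uc s n false) -> In c X -> join M M2 c = M c.
Proof. intros HX H. destruct (HX c H) as [s [n ->]]. reflexivity. Qed.

Lemma all_Q_ext X M1 M2 Q :
  (forall p c, In p Q -> occurs c (fst p) -> In c X) ->
  (forall c, In c X -> M1 c = M2 c) -> all_Q M1 Q -> all_Q M2 Q.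
Proof.
  intros HQ HM H p Hp e.
  apply (proj1 (sat_ext M1 M2 e e _ (fun c Hc => HM c (HQ p c Hp Hc)) (fun _ _ _ => eq_refl))).
  apply H; auto.
Qed.

Lemma newlemma_ok X Init Tr Bad Qs N F m sg i Lp l sg' :
 safety_problem X Init Tr Bad ->
 Inv X Init Tr Bad (mkState Qs N F) -> i < N -> In (m,sg,S i) Qs ->
 itp_ok (Fop X Init Tr (qi (F i))) (mpsk X m) Lp ->
 abs_rel is_sk (unprimef X Lp) l sg' ->
 Inv X Init Tr Bad (mkState Qs N (add_upto F (S i) (l, sg))).
Proof.
  intros hP HI HiN Hin Hitp Ha.
  destruct hP as (HX & GI & GT & GB & CI & CB & CT).
  destruct HI as (Q1 & Q2 & Q3 & F1 & F2 & F3 & F4 & F5 & F6).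
  destruct Hitp as (GLp & CLp & HA & HB).
  destruct Ha as (g & gW & gSk & gfree & leq & dom & subeq & Wn).
  assert (Hm : forall c, occurs c m -> In c X) by (intros; eapply Q1; eauto).
  assert (gX : forall c, In c X -> g c = None).
  { intros c Hc. destruct (HX c Hc) as [s [n ->]].
    destruct (g (Uc s n false)) eqn:E; auto. exfalso.
    assert (is_sk (Uc s n false)) by (apply gW; congruence). exact H. }
  assert (Cl : forall c, occurs c l -> In c X).
  { intros c Hc. rewrite leq in Hc. unfold repl_consts in Hc.
    apply occurs_map in Hc.
    destruct Hc as [[s [n [_ H]]]|[d [Hd H]]]; [simpl in H; contradiction|].
    destruct (g d) eqn:Eg; simpl in H; [contradiction|]. subst d.
    unfold unprimef in Hd. apply occurs_map in Hd.
    destruct Hd as [[s [n [_ H]]]|[d [Hd H]]]; [simpl in H; contradiction|].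
    destruct (CLp d Hd) as [_ Hd2].
    destruct (mpsk_occ X m d Hm HX Hd2) as [Hx|Hx].
    - destruct d as [|s n [|]]; simpl in Hx; try contradiction.
      simpl in H. destruct (in_dec const_eq_dec (Uc s n false) X); [|contradiction].
      simpl in H. subst c. assumption.
    - destruct d as [k|]; simpl in Hx; try contradiction. simpl in H. subst c.
      exfalso. rewrite (gSk k I) in Eg. discriminate. }
  assert (Il : forall M, Msat M Init -> Msat M l).
  { intros M HMI e. apply (l_sem X Lp l g M e leq).
    apply (HA _ e). right. unfold primef. apply sat_map.
    apply (sat_ext_imp M _ e _ Init); [| |apply HMI].
    - intros c Hc. destruct (HX c (CI c Hc)) as [s [n ->]]. simpl.
      destruct (in_dec const_eq_dec (Uc s n false) X) as [Hi|Hi]; [|exfalso; apply Hi, CI, Hc].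
      simpl. destruct (in_dec const_eq_dec (Uc s n false) X); [|contradiction]. simpl. rewrite (gX _ Hi). reflexivity.
    - intros s n Hf. exfalso. exact (GI s n Hf). }
  assert (Tl : forall M M2, all_Q M (F i) -> Msat (join M M2) Tr -> Msat M2 l).
  { intros M M2 HQ HT e. apply (l_sem X Lp l g M2 e leq).
    set (Mst := fun c => match c as c0 return sval (csort c0) with
                 | Sk k => e SInt k | c0 => join M M2 c0 end).
    assert (HMst : forall c, ~ is_sk c -> Mst c = join M M2 c).
    { intros [k|s n b] Hc; [exfalso; exact (Hc I)|reflexivity]. }
    assert (HA' := HA Mst e). simpl in HA'.
    assert (HL : sat Mst e Lp).
    { apply HA'. left. split.
      - apply all_Q_qi. apply (all_Q_ext X M); auto.
        + intros p c Hp Hc. eapply F3; eauto.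
        + intros c Hc. rewrite HMst. symmetry. apply (join_X X); auto.
          destruct (HX c Hc) as [s [n ->]]. simpl; auto.
      - apply (sat_ext_imp (join M M2) Mst e e Tr); [| |apply HT].
        + intros c Hc. rewrite HMst; auto. destruct (CT c Hc) as [Hx|Hx].
          * destruct (HX c Hx) as [s [n ->]]. simpl; auto.
          * destruct c; simpl in *; auto.
        + intros s n Hf. exfalso. exact (GT s n Hf). }
    apply (sat_ext_imp Mst _ e e Lp); [| |exact HL].
    - intros c Hc. destruct (CLp c Hc) as [_ Hc2].
      destruct (mpsk_occ X m c Hm HX Hc2) as [Hx|Hx].
      + destruct c as [|s n [|]]; simpl in Hx; try contradiction.
        simpl. destruct (in_dec const_eq_dec (Uc s n false) X); [|contradiction].
        simpl. rewrite (gX _ Hx). reflexivity.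
      + destruct c as [k|]; simpl in Hx; try contradiction. simpl.
        rewrite (gSk k I). reflexivity.
    - intros s n Hf. exfalso. exact (GLp s n Hf). }
  unfold Inv; cbn [queue level frames].
  refine (conj Q1 (conj Q2 (conj Q3 _))).
  split; [|split; [|split; [|split; [|split]]]].
  - apply in_add_upto. right. exact F1.
  - intros i' j p Hj Hp. apply in_add_upto in Hp. apply in_add_upto.
    destruct Hp as [[H1 H2]|H]; [left; split; auto; lia|right; eapply F2; eauto].
  - intros i' p c Hp Hc. apply in_add_upto in Hp.
    destruct Hp as [[_ ->]|H]; [apply Cl; exact Hc|eapply F3; eauto].
  - intros i' M HMI p Hp. apply in_add_upto in Hp.
    destruct Hp as [[_ ->]|H]; [apply Il; exact HMI|apply (F4 i' M HMI); auto].
  - intros j M M2 HQ HT p Hp.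
    assert (HQo : all_Q M (F j)) by (intros q Hq; apply HQ; apply in_add_upto; auto).
    apply in_add_upto in Hp. destruct Hp as [[Hj ->]|H].
    + simpl. apply (Tl M M2); auto. intros q Hq. apply HQo. eapply F2; [|exact Hq]. lia.
    + eapply F5; eauto.
  - intros j Hj M e HQ. apply (F6 j Hj M e). intros q Hq. apply HQ. apply in_add_upto; auto.
Qed.

Lemma push_ok X Init Tr Bad Qs N F i l phi psi sg :
 safety_problem X Init Tr Bad ->
 Inv X Init Tr Bad (mkState Qs N F) -> i < N ->
 In (l, sg) (F i) ->
 Permutation (disjuncts l) (disjuncts phi ++ disjuncts psi) ->
 (forall M, Msat M Init -> Msat M phi) ->
 (forall M, Msat M phi -> all_Q M (F i) -> Msat M (qi (F i)) -> Msat M Tr ->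
               Msat M (primef X phi)) ->
 Inv X Init Tr Bad (mkState Qs N (add_upto F (S i) (phi, sg))).
Proof.
  intros hP HI HiN Hl Hperm HIp HPp.
  destruct hP as (HX & GI & GT & GB & CI & CB & CT).
  destruct HI as (Q1 & Q2 & Q3 & F1 & F2 & F3 & F4 & F5 & F6).
  assert (Cphi : forall c, occurs c phi -> In c X).
  { intros c Hc. destruct (disj_occ c phi Hc) as [d [Hd Hcd]].
    apply (F3 i (l, sg) c Hl). simpl. apply (occ_disj c l d); auto.
    apply (Permutation_in d (Permutation_sym Hperm)). apply in_app_iff; auto. }
  assert (Tl : forall M M2, Msat M phi -> all_Q M (F i) -> Msat (join M M2) Tr -> Msat M2 phi).
  { intros M M2 Hphi HQ HT e.
    assert (HMj : forall c, In c X -> M c = join M M2 c).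
    { intros c Hc. symmetry. apply (join_X X); auto. }
    assert (Hp : Msat (join M M2) (primef X phi)).
    { apply HPp; auto.
      - intro e'. apply (sat_ext_imp M _ e' e' phi); [intros c Hc; apply HMj, Cphi, Hc|auto|auto].
      - apply (all_Q_ext X M); auto. intros p c Hp Hc. eapply F3; eauto.
      - apply all_Q_qi. apply (all_Q_ext X M); auto. intros p c Hp Hc. eapply F3; eauto. }
    specialize (Hp e). unfold primef in Hp. apply sat_map in Hp.
    revert Hp. apply (sat_ext_imp _ M2 e e phi); [|auto].
    intros c Hc. destruct (HX c (Cphi c Hc)) as [s [n ->]]. simpl.
    destruct (in_dec const_eq_dec (Uc s n false) X); [reflexivity|].
    exfalso; auto. }
  unfold Inv; cbn [queue level frames].
  refine (conj Q1 (conj Q2 (conj Q3 _))).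
  split; [|split; [|split; [|split; [|split]]]].
  - apply in_add_upto. right. exact F1.
  - intros i' j p Hj Hp. apply in_add_upto in Hp. apply in_add_upto.
    destruct Hp as [[H1 H2]|H]; [left; split; auto; lia|right; eapply F2; eauto].
  - intros i' p c Hp Hc. apply in_add_upto in Hp.
    destruct Hp as [[_ ->]|H]; [apply Cphi; exact Hc|eapply F3; eauto].
  - intros i' M HMI p Hp. apply in_add_upto in Hp.
    destruct Hp as [[_ ->]|H]; [apply HIp; exact HMI|apply (F4 i' M HMI); auto].
  - intros j M M2 HQ HT p Hp.
    assert (HQo : all_Q M (F j)) by (intros q Hq; apply HQ; apply in_add_upto; auto).
    apply in_add_upto in Hp. destruct Hp as [[Hj ->]|H].
    + simpl. apply (Tl M M2); auto.
      * apply (HQ (phi, sg)). apply in_add_upto. left; split; auto; lia.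
      * intros q Hq. apply HQo. eapply F2; [|exact Hq]. lia.
    + eapply F5; eauto.
  - intros j Hj M e HQ. apply (F6 j Hj M e). intros q Hq. apply HQ. apply in_add_upto; auto.
Qed.

Lemma step_ok X Init Tr Bad s t :
  safety_problem X Init Tr Bad -> Inv X Init Tr Bad s -> step X Init Tr Bad s t ->
  Inv X Init Tr Bad t.
Proof.
  intros hP HI Hs. destruct Hs.
  - destruct HI as (Q1 & Q2 & Q3 & F1 & F2 & F3 & F4 & F5 & F6).
    unfold Inv; cbn [queue level frames] in *.
    do 8 (split; [assumption|]).
    intros j Hj M e HQ HB.
    destruct (Nat.eq_dec j N) as [->|Hne]; [|apply (F6 j ltac:(lia) M e HQ HB)].
    exact (H M e (all_Q_qi _ _ HQ e) HB).
  - destruct hP as (HX & GI & GT & GB & CI & CB & CT).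
    destruct HI as (Q1 & Q2 & Q3 & F1 & R).
    unfold Inv; cbn [queue level frames] in *.
    split; [|split; [|split]]; try exact (conj F1 R).
    + intros m' sg' i' [Hq|Hq]; [|eapply Q1; eauto].
      injection Hq as <- <- <-. destruct H as (_ & Hc & _). exact Hc.
    + intros m' sg' i' [Hq|Hq]; [|eapply Q2; eauto].
      injection Hq as <- <- <-. intros M e Hs.
      destruct (H1 M e Hs) as [_ HB].
      exists 0, (fun _ => M). split; [reflexivity|]. split; [intros; lia|].
      intro e'. eapply ground_sat; eauto.
    + intros m' sg' [Hq|Hq]; [|eapply Q3; eauto].
      injection Hq as <- <- HN. subst N.
      destruct H0 as [M [e Hs]]. exists M, e. split; auto.
      destruct (H1 M e Hs) as [Hq _].
      apply (qi_in _ _ _ _ F1) in Hq. apply apply_subst_sat in Hq.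
      intro e'. eapply ground_sat; eauto.
  - eapply pred_ok; eauto.
  - eapply newlemma_ok; eauto.
  - eapply push_ok; eauto.
Qed.

Lemma reach_inv X Init Tr Bad s :
  safety_problem X Init Tr Bad -> reachable X Init Tr Bad s -> Inv X Init Tr Bad s.
Proof.
  intros hP Hr. induction Hr.
  - apply Inv_init; auto.
  - eapply step_ok; eauto.
Qed.

Theorem lemma3 (X : list const) (Init Tr Bad : form)
  (hP : safety_problem X Init Tr Bad)
  (s : state) (hs : reachable X Init Tr Bad s) :
  (returns_cex s -> exists k, has_cex Init Tr Bad k) /\
  (returns_safe s -> is_safe Init Tr Bad).
Proof.
  pose proof (reach_inv _ _ _ _ _ hP hs) as HI.
  destruct HI as (Q1 & Q2 & Q3 & F1 & F2 & F3 & F4 & F5 & F6).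
  split.
  - intros [m [sg Hq]].
    destruct (Q3 m sg Hq) as [M [e [Hs HInit]]].
    destruct (Q2 m sg 0 Hq M e Hs) as [k [Ms [H0 [Htr Hb]]]].
    exists k, Ms. split; [rewrite H0; exact HInit|]. split; auto.
  - intros [i [HiN Hincl]] [k [Ms [H0 [Htr Hb]]]].
    assert (Hall : forall j, j <= k -> all_Q (Ms j) (frames s i)).
    { induction j; intros Hj.
      - apply F4; auto.
      - intros p Hp. destruct (Hincl p Hp) as [p' [Hp' Hf]].
        rewrite <- Hf. apply (F5 i (Ms j) (Ms (S j))); [apply IHj; lia|apply Htr; lia|exact Hp']. }
    apply (F6 i HiN (Ms k) env0 (Hall k (le_n k))). apply Hb.
Qed.
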